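(* Let $H\in\mathbb{R}^{m\times d}$, $L\in\mathbb{R}^{\ell\times d}$, $y\in\mathbb{R}^m$, $\tilde y\in\mathbb{R}^\ell$ be such that the solution sets $\{\theta\in\mathbb{R}^d: H\theta=y\}$ and $\{\theta\in\mathbb{R}^d: L\theta=\tilde y\}$ are both non-empty. Let $\Sigma\in\mathbb{R}^{d\times d}$ be symmetric positive semidefinite. Then: (a) If there is $a\in\mathbb{R}\setminus\{0\}$ with $a\,L^\top L=H^\top H$ and $a\,L^\top\tilde y=H^\top y$, then $\{\theta: H\theta=y\}=\{\theta: L\theta=\tilde y\}$. (b) Suppose $\operatorname{tr}(H\Sigma H^\top)>0$ and $\operatorname{tr}(L\Sigma L^\top)>0$. Then $ATS_s(x,H,y)=ATS_s(x,L,\tilde y)$ for all $x\in\mathbb{R}^d$ if and only if there exists $a>0$ with $a\,L^\top L=H^\top H$, $a\,L^\top\tilde y=H^\top y$ and $\|y\|=\sqrt{a}\,\|\tilde y\|$. (c) Suppose additionally $\operatorname{tr}(H\Sigma H^\top H\Sigma H^\top)\neq 0$ and $\operatorname{tr}(L\Sigma L^\top L\Sigma L^\top)\neq0$. Then $ATS_F(x,H,y)=ATS_F(x,L,\tilde y)$ for all $x\in\mathbb{R}^d$ if and only if there exists $a>0$ with $a\,L^\top L=H^\top H$, $a\,L^\top\tilde y=H^\top y$ and $\|y\|=\sqrt{a}\,\|\tilde y\|$.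
   Context: For a matrix $H\in\mathbb{R}^{m\times d}$, a vector $y\in\mathbb{R}^m$ and $x\in\mathbb{R}^d$, the Anova-type statistic is $ATS(x,H,y)=(Hx-y)^\top(Hx-y)$. Given a fixed symmetric positive semidefinite matrix $\Sigma\in\mathbb{R}^{d\times d}$, $ATS_s(x,H,y)=ATS(x,H,y)/\operatorname{tr}(H\Sigma H^\top)$ and $ATS_F(x,H,y)=ATS_s(x,H,y)\cdot\frac{[\operatorname{tr}(H\Sigma H^\top)]^2}{\operatorname{tr}(H\Sigma H^\top H\Sigma H^\top)}$. The same $\Sigma$ is used for both $H$ and $L$. $\|\cdot\|$ is the Euclidean norm. *)

(* Defs.v *)
From mathcomp Require Import all_boot all_order all_algebra.
Set Implicit Arguments. Unset Strict Implicit. Unset Printing Implicit Defensive.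
Import Order.TTheory GRing.Theory Num.Theory.
Local Open Scope ring_scope.

Section Defs.
Variable R : rcfType.

Definition ATS (m d : nat) (x : 'cV[R]_d) (H : 'M[R]_(m, d)) (y : 'cV[R]_m) : R :=
  (((H *m x - y)^T *m (H *m x - y)) 0 0).

Definition ATS_s (m d : nat) (Sigma : 'M[R]_d) (x : 'cV[R]_d) (H : 'M[R]_(m, d))
  (y : 'cV[R]_m) : R :=
  ATS x H y / \tr (H *m Sigma *m H^T).

Definition ATS_F (m d : nat) (Sigma : 'M[R]_d) (x : 'cV[R]_d) (H : 'M[R]_(m, d))
  (y : 'cV[R]_m) : R :=
  ATS_s Sigma x H y * ((\tr (H *m Sigma *m H^T)) ^+ 2
                       / \tr (H *m Sigma *m H^T *m H *m Sigma *m H^T)).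

Definition enorm (n : nat) (v : 'cV[R]_n) : R := Num.sqrt (\sum_i v i 0 ^+ 2).

Definition psd (d : nat) (S : 'M[R]_d) : Prop :=
  S^T = S /\ forall v : 'cV[R]_d, 0 <= ((v^T *m S *m v) 0 0).

Definition solset (m d : nat) (H : 'M[R]_(m, d)) (y : 'cV[R]_m) : 'cV[R]_d -> Prop :=
  fun theta => H *m theta = y.
End Defs.

(* Main.v *)
Require Import Defs.
From mathcomp Require Import all_boot all_order all_algebra.
From mathcomp Require Import ring lra.
Import Order.TTheory GRing.Theory Num.Theory.
Set Implicit Arguments. Unset Strict Implicit. Unset Printing Implicit Defensive.
Local Open Scope ring_scope.

Section Help.
Variable R : rcfType.

Definition qf (d : nat) (P : 'M[R]_d) (x : 'cV[R]_d) : R := (x^T *m P *m x) 0 0.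
Definition lf (d : nat) (b : 'cV[R]_d) (x : 'cV[R]_d) : R := (x^T *m b) 0 0.
Definition ss (m : nat) (y : 'cV[R]_m) : R := (y^T *m y) 0 0.

Lemma scal_tr (m : nat) (u v : 'cV[R]_m) : (u^T *m v) 0 0 = (v^T *m u) 0 0.
Proof. by rewrite -[in LHS](trmxK (u^T *m v)) mxE trmx_mul trmxK. Qed.

Lemma ATS_expand (m d : nat) (x : 'cV[R]_d) (H : 'M[R]_(m, d)) (y : 'cV[R]_m) :
  ATS x H y = qf (H^T *m H) x - 2 * lf (H^T *m y) x + ss y.
Proof.
have e: y^T *m (H *m x) = (x^T *m (H^T *m y))^T by rewrite !trmx_mul !trmxK mulmxA.
rewrite /ATS /qf /lf /ss [(H *m x - y)^T]linearB /= trmx_mul mulmxBl !mulmxBr e !mulmxA !mxE.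
ring.
Qed.

Lemma qfB (d : nat) (P Q : 'M[R]_d) (c : R) x : qf (P - c *: Q) x = qf P x - c * qf Q x.
Proof. by rewrite /qf mulmxBr mulmxBl -scalemxAr -scalemxAl !mxE. Qed.
Lemma lfB (d : nat) (P Q : 'cV[R]_d) (c : R) x : lf (P - c *: Q) x = lf P x - c * lf Q x.
Proof. by rewrite /lf mulmxBr -scalemxAr !mxE. Qed.
Lemma qfN (d : nat) (P : 'M[R]_d) x : qf P (- x) = qf P x.
Proof. by rewrite /qf [(- x)^T]linearN /= mulNmx mulmxN mulNmx opprK. Qed.
Lemma lfN (d : nat) (b : 'cV[R]_d) x : lf b (- x) = - lf b x.
Proof. by rewrite /lf [(- x)^T]linearN /= mulNmx mxE. Qed.
Lemma qf0 (d : nat) (P : 'M[R]_d) : qf P 0 = 0.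
Proof. by rewrite /qf trmx0 mul0mx mul0mx mxE. Qed.
Lemma lf0 (d : nat) (b : 'cV[R]_d) : lf b 0 = 0.
Proof. by rewrite /lf trmx0 mul0mx mxE. Qed.

Lemma madd (m n : nat) (A B : 'M[R]_(m, n)) i j : (A + B) i j = A i j + B i j.
Proof. by rewrite mxE. Qed.

Lemma bf_delta (d : nat) (P : 'M[R]_d) (i j : 'I_d) :
  ((@delta_mx R d 1 i 0)^T *m P *m @delta_mx R d 1 j 0) 0 0 = P i j.
Proof. by rewrite trmx_delta -rowE -colE !mxE. Qed.

Lemma lf_delta (d : nat) (b : 'cV[R]_d) (i : 'I_d) : lf b (delta_mx i 0) = b i 0.
Proof. by rewrite /lf trmx_delta -rowE mxE. Qed.

Lemma qf_sum (d : nat) (P : 'M[R]_d) (i j : 'I_d) :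
  qf P (delta_mx i 0 + delta_mx j 0) = P i i + P i j + P j i + P j j.
Proof.
rewrite /qf [(_ + _)^T]linearD /= !(mulmxDl, mulmxDr) !madd !bf_delta.
ring.
Qed.

Lemma qf_delta (d : nat) (P : 'M[R]_d) (i : 'I_d) : qf P (delta_mx i 0) = P i i.
Proof. exact: bf_delta. Qed.

Lemma quad_zero (d : nat) (P : 'M[R]_d) (b : 'cV[R]_d) (s : R) : P^T = P ->
  (forall x, qf P x - 2 * lf b x + s = 0) -> P = 0 /\ b = 0 /\ s = 0.
Proof.
move=> sP h.
have s0 : s = 0 by have := h 0; rewrite qf0 lf0; lra.
have hq : forall x, qf P x = 0.
  move=> x; have := h x; have := h (- x); rewrite qfN lfN s0; lra.
have hl : forall x, lf b x = 0.
  move=> x; have := h x; have := h (- x); rewrite qfN lfN s0; lra.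
split; last split => //.
  apply/matrixP => i j; rewrite mxE.
  have := qf_sum P i j; rewrite hq.
  have := hq (delta_mx i 0); have := hq (delta_mx j 0); rewrite !qf_delta.
  have -> : P j i = P i j by rewrite -[in LHS]sP mxE.
  lra.
apply/matrixP => i j; rewrite mxE (ord1 j) -lf_delta; exact: hl.
Qed.

Lemma qfZ (d : nat) (P : 'M[R]_d) (c : R) x : qf (c *: P) x = c * qf P x.
Proof. by rewrite /qf -scalemxAr -scalemxAl !mxE. Qed.
Lemma lfZ (d : nat) (b : 'cV[R]_d) (c : R) x : lf (c *: b) x = c * lf b x.
Proof. by rewrite /lf -scalemxAr !mxE. Qed.

Lemma core (m l d : nat) (H : 'M[R]_(m, d)) (L : 'M[R]_(l, d)) (y : 'cV[R]_m)
  (yt : 'cV[R]_l) (c : R) :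
  (forall x, ATS x H y = c * ATS x L yt) <->
  (c *: (L^T *m L) = H^T *m H /\ c *: (L^T *m yt) = H^T *m y /\ ss y = c * ss yt).
Proof.
split.
  move=> h.
  have [] := @quad_zero d (H^T *m H - c *: (L^T *m L)) (H^T *m y - c *: (L^T *m yt))
     (ss y - c * ss yt).
  - by rewrite linearB /= linearZ /= !trmx_mul !trmxK.
  - move=> x; rewrite qfB lfB; have := h x; rewrite !ATS_expand; lra.
  move=> /subr0_eq e1 [/subr0_eq e2 /subr0_eq e3].
  by split; [|split].
move=> [e1 [e2 e3]] x.
by rewrite !ATS_expand -e1 -e2 e3 qfZ lfZ; ring.
Qed.

Lemma ss_sum (m : nat) (y : 'cV[R]_m) : ss y = \sum_i y i 0 ^+ 2.
Proof. by rewrite /ss mxE; apply: eq_bigr => i _; rewrite mxE expr2. Qed.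

Lemma ss_ge0 (m : nat) (y : 'cV[R]_m) : 0 <= ss y.
Proof. by rewrite ss_sum; apply: sumr_ge0 => i _; apply: sqr_ge0. Qed.

Lemma enorm_ss (m : nat) (y : 'cV[R]_m) : enorm y = Num.sqrt (ss y).
Proof. by rewrite /enorm ss_sum. Qed.

Lemma ss_eq0 (m : nat) (w : 'cV[R]_m) : ss w = 0 -> w = 0.
Proof.
rewrite ss_sum => h; apply/matrixP => i j; rewrite (ord1 j) mxE.
have := @psumr_eq0P _ _ predT (fun i => w i 0 ^+ 2) (fun i _ => sqr_ge0 _) h i isT.
by move/eqP; rewrite sqrf_eq0 => /eqP.
Qed.

Lemma normal_eq (m d : nat) (A : 'M[R]_(m, d)) (z : 'cV[R]_m) th0 th :
  A *m th0 = z -> (A *m th = z <-> A^T *m A *m th = A^T *m z).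
Proof.
move=> h0; split; first by move=> <-; rewrite mulmxA.
move=> h.
have hv : A^T *m A *m (th - th0) = 0 by rewrite mulmxBr h -h0 mulmxA subrr.
have : ss (A *m (th - th0)) = 0.
  by rewrite /ss trmx_mul -!mulmxA (mulmxA A^T) hv mulmx0 mxE.
move/ss_eq0; rewrite mulmxBr h0 => /subr0_eq //.
Qed.

Lemma tr2 (m d : nat) (H : 'M[R]_(m, d)) (S : 'M[R]_d) :
  \tr (H *m S *m H^T) = \tr (H^T *m H *m S).
Proof. by rewrite mxtrace_mulC mulmxA. Qed.

Lemma tr4 (m d : nat) (H : 'M[R]_(m, d)) (S : 'M[R]_d) :
  \tr (H *m S *m H^T *m H *m S *m H^T) = \tr (S *m (H^T *m H) *m S *m (H^T *m H)).
Proof. by rewrite -!mulmxA mxtrace_mulC !mulmxA. Qed.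

Lemma tr4_ge0 (m d : nat) (H : 'M[R]_(m, d)) (S : 'M[R]_d) : S^T = S ->
  0 <= \tr (H *m S *m H^T *m H *m S *m H^T).
Proof.
move=> sS.
set M := H *m S *m H^T.
have -> : H *m S *m H^T *m H *m S *m H^T = M *m M by rewrite /M !mulmxA.
have sM : M^T = M by rewrite /M !trmx_mul trmxK sS mulmxA.
rewrite /mxtrace; apply: sumr_ge0 => i _; rewrite mxE; apply: sumr_ge0 => j _.
have -> : M j i = M i j by rewrite -[in LHS]sM mxE.
by rewrite -expr2 sqr_ge0.
Qed.
End Help.

Unset Implicit Arguments.
Theorem theorem2 (R : rcfType) (m l d : nat)
  (H : 'M[R]_(m, d)) (L : 'M[R]_(l, d)) (y : 'cV[R]_m) (yt : 'cV[R]_l)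
  (Sigma : 'M[R]_d)
  (hH : exists theta, solset H y theta)
  (hL : exists theta, solset L yt theta)
  (hS : psd Sigma) :
  (* (a) *)
  ((exists a : R, a != 0 /\ a *: (L^T *m L) = H^T *m H /\ a *: (L^T *m yt) = H^T *m y) ->
     forall theta, solset H y theta <-> solset L yt theta)
  /\
  (* (b) *)
  (0 < \tr (H *m Sigma *m H^T) -> 0 < \tr (L *m Sigma *m L^T) ->
    ((forall x : 'cV[R]_d, ATS_s Sigma x H y = ATS_s Sigma x L yt) <->
     (exists a : R, 0 < a /\ a *: (L^T *m L) = H^T *m H /\ a *: (L^T *m yt) = H^T *m y
                    /\ enorm y = Num.sqrt a * enorm yt)))
  /\
  (* (c) *)
  (0 < \tr (H *m Sigma *m H^T) -> 0 < \tr (L *m Sigma *m L^T) ->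
   \tr (H *m Sigma *m H^T *m H *m Sigma *m H^T) != 0 ->
   \tr (L *m Sigma *m L^T *m L *m Sigma *m L^T) != 0 ->
    ((forall x : 'cV[R]_d, ATS_F Sigma x H y = ATS_F Sigma x L yt) <->
     (exists a : R, 0 < a /\ a *: (L^T *m L) = H^T *m H /\ a *: (L^T *m yt) = H^T *m y
                    /\ enorm y = Num.sqrt a * enorm yt))).
Proof.
have [sS _] := hS.
have [t0 h0] := hH; have [t1 h1] := hL.
split.
  move=> [a [a0 [e1 e2]]] th.
  rewrite /solset (normal_eq th h0) (normal_eq th h1) -e1 -e2 -!scalemxAl.
  split; last by move->.
  by move/(congr1 (fun M => a^-1 *: M)); rewrite !scalerA mulVf // !scale1r.
have tHE : forall a, a *: (L^T *m L) = H^T *m H ->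
    \tr (H *m Sigma *m H^T) = a * \tr (L *m Sigma *m L^T).
  by move=> a e1; rewrite !tr2 -e1 -scalemxAl mxtraceZ.
have qHE : forall a, a *: (L^T *m L) = H^T *m H ->
    \tr (H *m Sigma *m H^T *m H *m Sigma *m H^T) =
    a * a * \tr (L *m Sigma *m L^T *m L *m Sigma *m L^T).
  move=> a e1; rewrite !tr4 -e1.
  rewrite -?scalemxAr -?scalemxAl -?scalemxAr -?scalemxAl -?scalemxAr -?scalemxAl.
  by rewrite ?scalerA !mxtraceZ ?mulrA.
have nrm : forall a, 0 < a -> (enorm y = Num.sqrt a * enorm yt <-> ss y = a * ss yt).
  move=> a a0; rewrite !enorm_ss -sqrtrM ?ltW //; split; last by move->.
  by move/eqP; rewrite eqr_sqrt ?ss_ge0 ?mulr_ge0 ?ss_ge0 ?(ltW a0) // => /eqP.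
split.
  move=> tHp tLp; split.
    move=> h; set c := \tr (H *m Sigma *m H^T) / \tr (L *m Sigma *m L^T).
    have [e1 [e2 e3]] : c *: (L^T *m L) = H^T *m H /\ c *: (L^T *m yt) = H^T *m y /\
        ss y = c * ss yt.
      apply/core => x; have := h x; rewrite /ATS_s /c => e.
      have -> : ATS x H y = ATS x H y / \tr (H *m Sigma *m H^T) * \tr (H *m Sigma *m H^T).
        by field; rewrite gt_eqF.
      by rewrite e; field; rewrite gt_eqF.
    have c0 : 0 < c by rewrite divr_gt0.
    by exists c; split => //; split => //; split => //; apply/nrm.
  move=> [a [a0 [e1 [e2 e3]]]] x.
  have [_ hc] := core H L y yt a.
  have hA := hc (conj e1 (conj e2 ((nrm a a0).1 e3))).
  rewrite /ATS_s hA (tHE a e1); field.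
  by rewrite gt_eqF // gt_eqF.
move=> tHp tLp qH0 qL0.
have qHp : 0 < \tr (H *m Sigma *m H^T *m H *m Sigma *m H^T) by rewrite lt_def qH0 tr4_ge0.
have qLp : 0 < \tr (L *m Sigma *m L^T *m L *m Sigma *m L^T) by rewrite lt_def qL0 tr4_ge0.
split.
  move=> h.
  set c := (\tr (L *m Sigma *m L^T) / \tr (L *m Sigma *m L^T *m L *m Sigma *m L^T)) /
    (\tr (H *m Sigma *m H^T) / \tr (H *m Sigma *m H^T *m H *m Sigma *m H^T)).
  have [e1 [e2 e3]] : c *: (L^T *m L) = H^T *m H /\ c *: (L^T *m yt) = H^T *m y /\
      ss y = c * ss yt.
    apply/core => x; have := h x; rewrite /ATS_F /ATS_s /c => e.
    have -> : ATS x H y = ATS x H y / \tr (H *m Sigma *m H^T) *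
        (\tr (H *m Sigma *m H^T) ^+ 2 / \tr (H *m Sigma *m H^T *m H *m Sigma *m H^T)) *
        (\tr (H *m Sigma *m H^T *m H *m Sigma *m H^T) / \tr (H *m Sigma *m H^T)).
      by field; rewrite !gt_eqF.
    by rewrite e; field; rewrite !gt_eqF.
  have c0 : 0 < c by rewrite !divr_gt0.
  by exists c; split => //; split => //; split => //; apply/nrm.
move=> [a [a0 [e1 [e2 e3]]]] x.
have [_ hc] := core H L y yt a.
have hA := hc (conj e1 (conj e2 ((nrm a a0).1 e3))).
rewrite /ATS_F /ATS_s hA (tHE a e1) (qHE a e1); field.
by rewrite qL0 !gt_eqF.
Qed.
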